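(* Let $d\ge1$, $N\ge1$, $T>0$, let $\mathcal{K}:\mathbb{R}^d\to\mathbb{R}^d$ be Lipschitz continuous and compactly supported in $B_R(0)$, and for $\alpha,\beta\in\mathbb{R}$ let $K^N_{\alpha,\beta}(z)=N^{-\alpha}\mathcal{K}(z/N^\beta)$. Assume the desired velocity vanishes, $v_\textup{d}\equiv0$. Let $\alpha,\beta,\alpha',\beta'\in\mathbb{R}$ with $\alpha+\beta=\alpha'+\beta'$, let $U^N(z)=N^{\beta'-\beta}z$, and let $\mu^N_\cdot,\nu^N_\cdot\in C([0,T];\mathcal{M}^N_1(\mathbb{R}^d))$ be the solutions of the Cauchy problem with interaction kernels $K^N_{\alpha,\beta}$ and $K^N_{\alpha',\beta'}$ respectively, and initial data $\bar\mu^N$ and $\bar\nu^N=U^N\#\bar\mu^N$ in $\mathcal{M}^N_1(\mathbb{R}^d)$. Then $\nu^N_t=U^N\#\mu^N_t$ for all $t\in(0,T]$.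
   Context: $\mathcal{M}^N_1(\mathbb{R}^d)$ is the set of positive Borel measures on $\mathbb{R}^d$ with total mass $N$ and finite first moment; $\#$ denotes push-forward. With interaction kernel $K$ and $v_\textup{d}\equiv0$, the velocity is $v[\mu](x)=-\int K(y-x)\,d\mu(y)$. A solution of the Cauchy problem $\partial_t\mu_t+\nabla\cdot(\mu_tv[\mu_t])=0$, $\mu_0=\bar\mu$, on $[0,T]$ is a curve $\mu_\cdot\in C([0,T];\mathcal{M}^N_1(\mathbb{R}^d))$ given by $\mu_t=\gamma_t\#\bar\mu$, where the flow map satisfies $\gamma_t(x)=x+\int_0^tv[\mu_s](\gamma_s(x))\,ds$. *)

(* Defs.v *)
From HB Require Import structures.
From mathcomp Require Import all_boot all_order all_algebra.
From mathcomp Require Import all_classical all_reals all_analysis.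
Set Implicit Arguments. Unset Strict Implicit. Unset Printing Implicit Defensive.
Import Order.TTheory GRing.Theory Num.Theory numFieldNormedType.Exports.
Local Open Scope classical_set_scope.
Local Open Scope ring_scope.

Section defs.
Variables (R : realType) (d : nat).

Definition vec := 'rV[R]_d.
Definition Rd := g_sigma_algebraType (@open vec).
Definition meas := {measure set Rd -> \bar R}.

Definition enorm (x : vec) : R := Num.sqrt (\sum_(i < d) x ord0 i ^+ 2).

Definition inMN (N : nat) (mu : meas) : Prop :=
  mu setT = (N%:R)%:E /\ (\int[mu]_(x in [set: Rd]) (enorm x)%:E < +oo)%E.

Definition lipschitzE (f : vec -> vec) : Prop :=
  exists L : R, forall x y, enorm (f x - f y) <= L * enorm (x - y).

Definition compact_support_in_ball (f : vec -> vec) (Rr : R) : Prop :=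
  compact (closure [set x | f x != 0]) /\
  closure [set x | f x != 0] `<=` [set x | enorm x < Rr].

Definition Kscaled (K : vec -> vec) (N : nat) (a b : R) (z : vec) : vec :=
  (N%:R `^ (- a)) *: K ((N%:R `^ (- b)) *: z).

(* velocity field with v_d = 0: v[mu](x) = - \int K(y - x) dmu(y), componentwise *)
Definition velocity (K : vec -> vec) (mu : meas) (x : vec) : vec :=
  \row_(i < d) (- fine (\int[mu]_(y in [set: Rd]) ((K ((y : vec) - x)) ord0 i)%:E)).

(* Wasserstein-1 distance, Kantorovich-Rubinstein dual form *)
Definition lip1 (f : vec -> R) : Prop := forall x y, `|f x - f y| <= enorm (x - y).
Definition W1 (mu nu : meas) : \bar R :=
  ereal_sup [set (\int[mu]_(x in [set: Rd]) (f x)%:E -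
                  \int[nu]_(x in [set: Rd]) (f x)%:E)%E | f in lip1].

Definition curve_in_CMN (N : nat) (T : R) (mu : R -> meas) : Prop :=
  (forall t, 0 <= t <= T -> inMN N (mu t)) /\
  (forall t, 0 <= t <= T -> forall eps : R, 0 < eps ->
     exists2 del : R, 0 < del & forall s, 0 <= s <= T -> `|s - t| < del ->
       (W1 (mu s) (mu t) < eps%:E)%E).

Definition is_pushforward (nu mu : meas) (f : vec -> vec) : Prop :=
  forall A : set Rd, measurable A -> nu A = mu (f @^-1` A).

Definition is_flow (K : vec -> vec) (T : R) (mu : R -> meas) (gam : R -> Rd -> Rd) : Prop :=
  forall t, 0 <= t <= T ->
    measurable_fun [set: Rd] (gam t) /\
    forall (x : vec) (i : 'I_d),
      (@lebesgue_measure R).-integrable `[0, t]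
         (fun s => ((velocity K (mu s) (gam s x)) ord0 i)%:E) /\
      (gam t x : vec) ord0 i = x ord0 i +
        fine (\int[@lebesgue_measure R]_(s in `[0, t])
                 ((velocity K (mu s) (gam s x)) ord0 i)%:E).

Definition is_solution (K : vec -> vec) (N : nat) (T : R) (mubar : meas) (mu : R -> meas) : Prop :=
  curve_in_CMN N T mu /\
  exists gam : R -> Rd -> Rd, is_flow K T mu gam /\
    forall t, 0 <= t <= T -> is_pushforward (mu t) mubar (gam t).

End defs.

(* Main.v *)
Require Import Defs.
From HB Require Import structures.
From mathcomp Require Import all_boot all_order all_algebra.
From mathcomp Require Import all_classical all_reals all_analysis.
From mathcomp Require Import measurable_realfun ring lra.
Import Order.TTheory GRing.Theory Num.Theory numFieldNormedType.Exports.
Local Open Scope classical_set_scope.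
Local Open Scope ring_scope.

Module Aux.
Set Implicit Arguments. Unset Strict Implicit.
Section S.
Variables (R : realType) (d : nat).

Lemma meas_open (A : set (vec R d)) : open A -> measurable (A : set (Rd R d)).
Proof. by move=> oA; apply: sub_sigma_algebra. Qed.

Lemma cont_meas_R (f : vec R d -> R) : continuous f ->
  measurable_fun [set: Rd R d] (f : Rd R d -> R).
Proof.
move=> /continuousP cf; apply: (measurability _ (RGenOpens.measurableE R)).
move=> _ [_ [a [b ->] <-]]; rewrite setTI; apply: meas_open.
exact/cf/interval_open.
Qed.

Lemma cont_meas_V (f : vec R d -> vec R d) : continuous f ->
  measurable_fun [set: Rd R d] (f : Rd R d -> Rd R d).
Proof.
move=> /continuousP cf; apply: (@measurability _ _ (Rd R d) (Rd R d) setT f (@open (vec R d))) => //.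
move=> _ [B oB <-]; rewrite setTI; apply: meas_open. exact: cf.
Qed.
End S.
Section S2.
Variables (R : realType) (d : nat).
Local Notation vec := (vec R d).

Lemma comp_le_mx (z : vec) i : `|z ord0 i| <= `|z|.
Proof.
rewrite [X in _ <= X]mx_normrE.
exact: (le_bigmax 0 (fun ij : 'I_1 * 'I_d => `|z ij.1 ij.2|) (ord0, i)).
Qed.

Lemma comp_le_enorm (z : vec) i : `|z ord0 i| <= enorm z.
Proof.
rewrite /enorm -(sqrtr_sqr (z ord0 i)) ler_sqrt ?sumr_ge0 // => [|j _]; last exact: sqr_ge0.
rewrite (bigD1 i) //= lerDl sumr_ge0 // => j _; exact: sqr_ge0.
Qed.

Lemma sq_sum_le (I : finType) (F : I -> R) : (forall i, 0 <= F i) ->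
  \sum_i F i ^+ 2 <= (\sum_i F i) ^+ 2.
Proof.
move=> F0; rewrite expr2 big_distrl /= ler_sum // => i _.
by rewrite expr2 ler_wpM2l // (bigD1 i) //= lerDl sumr_ge0.
Qed.

Lemma enorm_le_sum (z : vec) : enorm z <= \sum_j `|z ord0 j|.
Proof.
rewrite /enorm -(ger0_norm (sumr_ge0 _ (fun j _ => normr_ge0 (z ord0 j)))).
rewrite -sqrtr_sqr ler_sqrt ?sqr_ge0 //.
rewrite (eq_bigr (fun j => `|z ord0 j| ^+ 2)); last first.
  by move=> j _; rewrite real_normK ?num_real.
apply: (@sq_sum_le _ (fun j => `|z ord0 j|)) => j; exact: normr_ge0.
Qed.

Lemma enorm_le_mx (z : vec) : enorm z <= d%:R * `|z|.
Proof.
apply: (le_trans (enorm_le_sum z)).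
rewrite mulr_natl -[in X in _ *+ X](card_ord d) -sumr_const; apply: ler_sum => j _; exact: comp_le_mx.
Qed.

Lemma enorm_ge0 (z : vec) : 0 <= enorm z.
Proof. exact: sqrtr_ge0. Qed.

Lemma lip_cont (V : normedModType R) (f : 'rV[R]_d -> V) (C : R) :
  (forall x y, `|f x - f y| <= C * `|x - y|) -> continuous f.
Proof.
move=> H x; apply/(@cvgrPdist_lt _ _ _ _ (nbhs_filter x)) => e e0.
have C1 : 0 < `|C| + 1 by rewrite ltr_wpDl.
have := @cvgr_dist_lt _ _ _ (nbhs x) (nbhs_filter x) id x (@cvg_id _ (nbhs x)) (e / (`|C|+1)) (divr_gt0 e0 C1).
apply: filterS => y hy.
apply: (le_lt_trans (H x y)).
apply: (le_lt_trans (ler_wpM2r (normr_ge0 _) (ler_norm C))).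
apply: (@le_lt_trans _ _ ((`|C| + 1) * `|x - y|)).
  by rewrite ler_wpM2r // lerDl.
by rewrite mulrC -ltr_pdivlMr.
Qed.

Lemma sp_bound (m : meas R d) (N : nat) (h : Rd R d -> R) (M : R) :
  m setT = (N%:R)%:E -> measurable_fun setT h -> (forall y, `|h y| <= M) ->
  m.-integrable setT (EFin \o h) /\
  `|fine (\int[m]_(y in setT) (h y)%:E)%E| <= N%:R * M.
Proof.
move=> mT mh hM.
have M0 : 0 <= M := le_trans (normr_ge0 _) (hM 0).
have mh' : measurable_fun [set: Rd R d] (fun y => (h y)%:E) by apply/measurable_EFinP.
have le1 : (\int[m]_(y in setT) `|(h y)%:E| <= (N%:R * M)%:E)%E.
  apply: (@le_trans _ _ (\int[m]_(y in setT) (cst M%:E) y)%E).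
    apply: ge0_le_integral => //.
    - exact: measurableT_comp.
    - by move=> y _; rewrite lee_fin.
  by rewrite integral_cst // mT -EFinM mulrC.
have hint : m.-integrable setT (EFin \o h).
  apply/integrableP; split => //.
  by apply: le_lt_trans le1 _; rewrite ltry.
split => //.
have fin := integrable_fin_num measurableT hint.
have H := le_trans (le_abse_integral m measurableT mh') le1.
by rewrite -(fineK fin) /= lee_fin in H.
Qed.


Lemma time_bound (h : R -> R) (s t0 W : R) : t0 <= s -> 0 <= W ->
  (@lebesgue_measure R).-integrable `[0, s] (fun r => (h r)%:E) ->
  (forall r, 0 <= r <= s -> `|h r| <= W * \1_(`]t0, +oo[) r) ->
  `|fine (\int[@lebesgue_measure R]_(r in `[0, s]) (h r)%:E)| <= W * (s - t0).
Proof.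
move=> ts W0 hint hb.
have [mh _] := integrableP _ _ _ hint.
have mI : measurable (`[0, s] : set (measurableTypeR R)) by exact: measurable_itv.
have fin := integrable_fin_num mI hint.
have le1 : (\int[@lebesgue_measure R]_(r in `[0%R, s]) `|(h r)%:E|
            <= (W * (s - t0))%:E)%E.
  apply: (@le_trans _ _ (\int[@lebesgue_measure R]_(r in `[0%R, s])
                          (W * \1_(`]t0, +oo[%classic) r)%:E)%E).
    apply: ge0_le_integral => //.
    - exact: measurableT_comp.
    - by apply/measurable_EFinP; apply: measurable_funM => //.
  have mA : measurable (`]t0, +oo[%classic : set (measurableTypeR R)).
    exact: measurable_itv.
  rewrite (integralZl_indic mI (fun _ => `]t0, +oo[%classic)) //; last first.
    by move=> W0'; move: (lt_le_trans W0' W0); rewrite ltxx.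
  rewrite integral_indic // EFinM; apply: lee_pmul => //.
  apply: (@le_trans _ _ (@lebesgue_measure R `]t0, s]%classic)).
    apply: le_measure.
    - by rewrite inE; apply: measurableI.
    - by rewrite inE; exact: measurable_itv.
    by move=> r [] /=; rewrite !in_itv /= andbT => -> /andP[_ ->].
  rewrite lebesgue_measure_itv /=; case: ifPn => _; first by rewrite -EFinB.
  by rewrite lee_fin subr_ge0.
have H := le_trans (le_abse_integral _ mI mh) le1.
by rewrite -(fineK fin) /= lee_fin in H.
Qed.


Lemma push_int (N : nat) (m0 m1 : meas R d) (G : Rd R d -> Rd R d) (F : Rd R d -> R) (M : R) :
  measurable_fun setT G -> is_pushforward m1 m0 G ->
  m0 setT = (N%:R)%:E -> measurable_fun setT F -> (forall y, `|F y| <= M) ->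
  (\int[m1]_(y in setT) (F y)%:E = \int[m0]_(y in setT) (F (G y))%:E)%E.
Proof.
move=> mG hp m0T mF FM.
have mFG : measurable_fun [set: Rd R d] (fun y => F (G y)).
  exact: measurableT_comp.
have [intFG _] := sp_bound m0T mFG (fun y => FM (G y)).
have mEF : measurable_fun [set: Rd R d] (fun y => (F y)%:E).
  by apply/measurable_EFinP.
have intFG' : m0.-integrable (G @^-1` setT) ((fun y => (F y)%:E) \o G).
  by rewrite preimage_setT.
have := integral_pushforward mG mEF intFG' measurableT.
rewrite preimage_setT => <-.
by apply: eq_measure_integral => A mA _; exact: hp.
Qed.

End S2.

Section Core.
Variables (R : realType) (d N : nat) (T : R) (Kc : vec R d -> vec R d) (L Km : R).
Variables (a b a' b' : R) (mubar nubar : meas R d) (mu nu : R -> meas R d).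
Variables (gam eta : R -> Rd R d -> Rd R d).
Hypothesis hd : (1 <= d)%N.
Hypothesis hN : (1 <= N)%N.
Hypothesis hT : 0 < T.
Hypothesis hab : a + b = a' + b'.
Hypothesis Lip : forall x y, enorm (Kc x - Kc y) <= L * enorm (x - y).
Hypothesis Kb : forall w i, `|Kc w ord0 i| <= Km.
Hypothesis mubarT : mubar setT = (N%:R)%:E.
Hypothesis nubarT : nubar setT = (N%:R)%:E.
Let lam := (N%:R : R) `^ (b' - b).
Hypothesis push0 : is_pushforward nubar mubar (fun z => lam *: z).
Let K1 := Kscaled Kc N a b.
Let K2 := Kscaled Kc N a' b'.
Hypothesis fl1 : is_flow K1 T mu gam.
Hypothesis pf1 : forall t, 0 <= t <= T -> is_pushforward (mu t) mubar (gam t).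
Hypothesis fl2 : is_flow K2 T nu eta.
Hypothesis pf2 : forall t, 0 <= t <= T -> is_pushforward (nu t) nubar (eta t).

Lemma NR_gt0 : 0 < (N%:R : R).
Proof. by rewrite ltr0n. Qed.

Lemma lam_gt0 : 0 < lam.
Proof. exact: powR_gt0 NR_gt0. Qed.

Lemma pw_gt0 (x : R) : 0 < (N%:R : R) `^ x.
Proof. exact: powR_gt0 NR_gt0. Qed.

Lemma Km_ge0 : 0 <= Km.
Proof. exact: le_trans (normr_ge0 _) (Kb 0 (Ordinal hd)). Qed.

Lemma Kcomp (a0 b0 : R) p i :
  (Kscaled Kc N a0 b0 p) ord0 i = (N%:R `^ (- a0)) * (Kc ((N%:R `^ (- b0)) *: p)) ord0 i.
Proof. by rewrite /Kscaled mxE. Qed.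

Lemma Kbound (a0 b0 : R) p i : `|(Kscaled Kc N a0 b0 p) ord0 i| <= N%:R `^ (- a0) * Km.
Proof.
rewrite Kcomp normrM gtr0_norm ?pw_gt0 // ler_wpM2l ?Kb //.
Qed.

Definition CK (a0 b0 : R) := N%:R `^ (- a0) * (`|L| * (d%:R * N%:R `^ (- b0))).

Lemma CK_ge0 a0 b0 : 0 <= CK a0 b0.
Proof.
by rewrite /CK !mulr_ge0 // ltW // pw_gt0.
Qed.

Lemma Klip (a0 b0 : R) p q i :
  `|(Kscaled Kc N a0 b0 p) ord0 i - (Kscaled Kc N a0 b0 q) ord0 i| <= CK a0 b0 * `|p - q|.
Proof.
rewrite !Kcomp -mulrBr normrM gtr0_norm ?pw_gt0 // /CK -!mulrA.
rewrite ler_wpM2l ?(ltW (pw_gt0 _)) //.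
set e := N%:R `^ (- b0).
have -> : Kc (e *: p) ord0 i - Kc (e *: q) ord0 i = (Kc (e *: p) - Kc (e *: q)) ord0 i.
  by rewrite !mxE.
apply: (le_trans (comp_le_enorm _ _)).
apply: (le_trans (Lip _ _)).
apply: (@le_trans _ _ (`|L| * enorm (e *: p - e *: q))).
  by rewrite ler_wpM2r ?enorm_ge0 ?ler_norm.
rewrite ler_wpM2l //.
apply: (le_trans (enorm_le_mx _)).
rewrite -scalerBr normrZ gtr0_norm ?pw_gt0 // mulrA.
Qed.

Lemma Kscale_eq w : lam *: K1 w = K2 (lam *: w).
Proof.
rewrite /K1 /K2 /Kscaled scalerA scalerA.
have NR0 : (N%:R : R) != 0 by rewrite gt_eqF // NR_gt0.
have e1 : lam * N%:R `^ (- a) = N%:R `^ (- a').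
  rewrite /lam -powRD; last by rewrite NR0 implybT.
  by congr (_ `^ _); move: hab; lra.
have e2 : N%:R `^ (- b') * lam = N%:R `^ (- b).
  rewrite /lam -powRD; last by rewrite NR0 implybT.
  by congr (_ `^ _); move: hab; lra.
by rewrite e1 e2.
Qed.

Lemma Kcont (a0 b0 : R) (q : vec R d) i :
  continuous (fun w : 'rV[R]_d => (Kscaled Kc N a0 b0 (w - q)) ord0 i).
Proof.
apply: (@lip_cont _ _ _ _ (CK a0 b0)) => x y.
apply: (le_trans (Klip _ _ _ _ _)).
by rewrite opprB addrA subrK.
Qed.

Lemma Kmeas (a0 b0 : R) (G : Rd R d -> Rd R d) (q : vec R d) i :
  measurable_fun setT G ->
  measurable_fun [set: Rd R d] (fun y => (Kscaled Kc N a0 b0 ((G y : vec R d) - q)) ord0 i).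
Proof.
move=> mG.
have h := cont_meas_R (@Kcont a0 b0 q i). exact: (measurableT_comp h mG).
Qed.

Lemma Umeas : measurable_fun [set: Rd R d] (fun z : Rd R d => (lam *: (z : vec R d) : Rd R d)).
Proof.
apply: cont_meas_V; apply: (@lip_cont _ _ _ _ lam) => x y.
by rewrite -scalerBr normrZ gtr0_norm ?lam_gt0.
Qed.

Lemma V1 r (p : vec R d) i : 0 <= r <= T ->
  (velocity K1 (mu r) p) ord0 i =
  - fine (\int[mubar]_(y in setT) ((K1 ((gam r y : vec R d) - p)) ord0 i)%:E).
Proof.
move=> hr; rewrite /velocity mxE.
have [mg _] := fl1 hr.
have mF := @Kmeas a b (fun y => y) p i (@measurable_id _ _ setT).
by rewrite (push_int mg (pf1 hr) mubarT mF (fun y => Kbound a b _ i)).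
Qed.

Lemma V2 r (p : vec R d) i : 0 <= r <= T ->
  (velocity K2 (nu r) p) ord0 i =
  - fine (\int[mubar]_(y in setT) ((K2 ((eta r (lam *: (y : vec R d)) : vec R d) - p)) ord0 i)%:E).
Proof.
move=> hr; rewrite /velocity mxE.
have [me _] := fl2 hr.
have mF := @Kmeas a' b' (fun y => y) p i (@measurable_id _ _ setT).
rewrite (push_int me (pf2 hr) nubarT mF (fun y => Kbound a' b' _ i)).
have mF2 := @Kmeas a' b' (eta r) p i me.
by rewrite (push_int Umeas push0 mubarT mF2 (fun y => Kbound a' b' _ i)).
Qed.

Definition Dl s (x : vec R d) : vec R d := (eta s (lam *: x) : vec R d) - lam *: (gam s x : vec R d).

Definition Dv r (x : vec R d) i :=
  (velocity K2 (nu r) (eta r (lam *: x))) ord0 i - lam * (velocity K1 (mu r) (gam r x)) ord0 i.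

Definition Sd r (x y : vec R d) i :=
  (K2 ((eta r (lam *: y) : vec R d) - eta r (lam *: x))) ord0 i -
  (K2 (lam *: (gam r y : vec R d) - lam *: (gam r x : vec R d))) ord0 i.

Lemma Sd_meas r x i : 0 <= r <= T -> measurable_fun [set: Rd R d] (fun y => Sd r x y i).
Proof.
move=> hr; have [mg _] := fl1 hr; have [me _] := fl2 hr.
apply: measurable_funB.
  exact: (@Kmeas a' b' (fun y => eta r (lam *: y)) _ i (measurableT_comp me Umeas)).
exact: (@Kmeas a' b' (fun y => (lam *: (gam r y : vec R d) : Rd R d)) _ i
          (measurableT_comp Umeas mg)).
Qed.

Lemma Dv_eq r x i : 0 <= r <= T ->
  Dv r x i = - fine (\int[mubar]_(y in setT) (Sd r x y i)%:E).
Proof.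
move=> hr; rewrite /Dv (V2 _ _ hr) (V1 _ _ hr).
have [mg _] := fl1 hr; have [me _] := fl2 hr.
set f2 := fun y : Rd R d => (K2 ((eta r (lam *: (y : vec R d)) : vec R d) - eta r (lam *: x))) ord0 i.
set f1 := fun y : Rd R d => (K1 ((gam r y : vec R d) - gam r x)) ord0 i.
have mf2 : measurable_fun [set: Rd R d] f2.
  exact: (@Kmeas a' b' (fun y => eta r (lam *: y)) _ i (measurableT_comp me Umeas)).
have mf1 : measurable_fun [set: Rd R d] f1 by exact: (@Kmeas a b (gam r) _ i mg).
have [int2 _] := sp_bound mubarT mf2 (fun y => Kbound a' b' _ i).
have [int1 _] := sp_bound mubarT mf1 (fun y => Kbound a b _ i).
have mf1' : measurable_fun [set: Rd R d] (fun y => lam * f1 y).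
  by apply: measurable_funM => //; exact: measurable_cst.
have lf1 y : `|lam * f1 y| <= lam * (N%:R `^ (- a) * Km).
  by rewrite normrM gtr0_norm ?lam_gt0 // ler_wpM2l ?(ltW lam_gt0) // Kbound.
have [int1' _] := sp_bound mubarT mf1' lf1.
have fin1 := integrable_fin_num measurableT int1.
have fin2 := integrable_fin_num measurableT int2.
have -> : (\int[mubar]_(y in setT) (Sd r x y i)%:E =
  ((fine (\int[mubar]_(y in setT) (f2 y)%:E)) -
    lam * fine (\int[mubar]_(y in setT) (f1 y)%:E))%:E)%E.
  rewrite (eq_integral (fun y => (f2 y)%:E - (lam * f1 y)%:E)%E); last first.
    move=> y _; rewrite /Sd /f2 /f1 -scalerBr -Kscale_eq EFinB.
    by congr (_ - _%:E)%E; rewrite mxE.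
  rewrite integralB_EFin //.
  rewrite [X in (_ - X)%E](eq_integral (fun y => lam%:E * (f1 y)%:E)%E); last by move=> y _; rewrite EFinM.
  rewrite integralZl //.
  by rewrite EFinB EFinM !fineK.
rewrite /=.
ring.
Qed.

Lemma mx_le (z : vec R d) (E : R) : 0 <= E -> (forall j, `|z ord0 j| <= E) -> `|z| <= E.
Proof.
move=> E0 hz; change (mx_norm z <= E); rewrite mx_normrE.
apply: bigmax_le => //= -[k j] _ /=.
by rewrite (ord1 k); exact: hz.
Qed.

Lemma Dv_bound r x i M : 0 <= r <= T -> (forall y, `|Sd r x y i| <= M) ->
  `|Dv r x i| <= N%:R * M.
Proof.
move=> hr hM; rewrite Dv_eq // normrN.
exact: (sp_bound mubarT (Sd_meas x i hr) hM).2.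
Qed.

Lemma Sd_bound1 r x y i : `|Sd r x y i| <= 2 * (N%:R `^ (- a') * Km).
Proof.
rewrite /Sd mulr2n mulrDl mul1r; apply: (le_trans (ler_normB _ _)).
by apply: lerD; exact: Kbound.
Qed.

Lemma Sd_bound2 r x y i E : (forall z j, `|(Dl r z) ord0 j| <= E) ->
  `|Sd r x y i| <= CK a' b' * (2 * E).
Proof.
move=> hE.
have E0 : 0 <= E := le_trans (normr_ge0 _) (hE 0 (Ordinal hd)).
rewrite /Sd; apply: (le_trans (Klip _ _ _ _ _)).
rewrite ler_wpM2l ?CK_ge0 //.
have -> : (eta r (lam *: y) : vec R d) - eta r (lam *: x) -
    (lam *: (gam r y : vec R d) - lam *: (gam r x : vec R d)) = Dl r y - Dl r x.
  by apply/matrixP => k l; rewrite /Dl !mxE; ring.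
apply: (le_trans (ler_normB _ _)).
by rewrite mulr2n mulrDl mul1r; apply: lerD; apply: mx_le.
Qed.

Lemma time_eq s x i : 0 <= s <= T ->
  (@lebesgue_measure R).-integrable `[0, s] (fun r => (Dv r x i)%:E) /\
  (Dl s x) ord0 i = fine (\int[@lebesgue_measure R]_(r in `[0, s]) (Dv r x i)%:E).
Proof.
move=> hs.
have [_ h2] := fl2 hs; have [_ h1] := fl1 hs.
have [i2 e2] := h2 (lam *: x) i; have [i1 e1] := h1 x i.
have mI : measurable (`[0, s] : set (measurableTypeR R)) by exact: measurable_itv.
have -> : (fun r => (Dv r x i)%:E) =
    (fun r => ((velocity K2 (nu r) (eta r (lam *: x))) ord0 i)%:E -
              lam%:E * ((velocity K1 (mu r) (gam r x)) ord0 i)%:E)%E.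
  by apply: funext => r; rewrite /Dv EFinB EFinM.
split; first by apply: integrableB => //; exact: integrableZl.
rewrite integralB //; last exact: integrableZl.
rewrite integralZl //.
have fin1 := integrable_fin_num mI i1.
have fin2 := integrable_fin_num mI i2.
rewrite -(fineK fin1) -(fineK fin2) -EFinM -EFinB /=.
rewrite /Dl !mxE e2 e1 mxE.
ring.
Qed.

Lemma small0 (z B : R) : 0 <= B -> (forall k, `|z| <= B / 2 ^+ k) -> z = 0.
Proof.
move=> B0 H; apply/eqP; rewrite -normr_le0 leNgt; apply/negP => zpos.
set k := Num.Def.archi_bound (B / `|z|).
have hk : B / `|z| < k%:R by apply: archi_boundP; rewrite divr_ge0 // ltW.
have k2 : (k%:R : R) <= 2 ^+ k by rewrite -natrX ler_nat ltnW // ltn_expl.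
have h1 := lt_le_trans hk k2.
rewrite ltr_pdivrMr // in h1.
have := H k; rewrite ler_pdivlMr ?exprn_gt0 // => h2.
by move: h1 h2; rewrite mulrC; lra.
Qed.

Let V := N%:R * (2 * (N%:R `^ (- a') * Km)).
Let B := V * (T + 1).
Let Lc := N%:R * (CK a' b' * 2).
Let hh := (2 * (Lc + 1))^-1.

Lemma V_ge0 : 0 <= V.
Proof. by rewrite /V !mulr_ge0 ?Km_ge0 // ltW // pw_gt0. Qed.

Lemma B_ge0 : 0 <= B.
Proof. by rewrite /B mulr_ge0 ?V_ge0 //; move: hT; lra. Qed.

Lemma Lc_ge0 : 0 <= Lc.
Proof. by rewrite /Lc !mulr_ge0 ?CK_ge0. Qed.

Lemma hh_gt0 : 0 < hh.
Proof. by rewrite /hh invr_gt0; have := Lc_ge0; lra. Qed.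

Lemma Lc_hh : Lc * hh <= 2^-1.
Proof.
have L0 := Lc_ge0.
rewrite /hh ler_pdivrMr; last by lra.
rewrite mulrA mulVf ?mul1r; lra.
Qed.

Lemma ind_itv (t0 r : R) : (\1_(`]t0, +oo[%classic) r : R) = ((t0 < r)%R)%:R.
Proof. by rewrite indicE mem_setE in_itv /= andbT. Qed.

Lemma Dl_bound s x i : 0 <= s <= T -> `|(Dl s x) ord0 i| <= B.
Proof.
move=> hs; have [int ->] := time_eq x i hs.
have hs' : -1 <= s by move: hs => /andP[]; lra.
apply: (le_trans (time_bound hs' V_ge0 int _)).
  move=> r /andP[r0 rs]; rewrite ind_itv.
  have -> : (-1 < r) = true by apply/idP; lra.
  rewrite mulr1; apply: Dv_bound => [|y]; last exact: Sd_bound1.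
  by move: hs => /andP[_ sT]; apply/andP; split => //; lra.
rewrite /B ler_wpM2l ?V_ge0 //.
by move: hs => /andP[_ sT]; lra.
Qed.

Lemma step (n : nat) :
  (forall s, 0 <= s <= T -> s <= n%:R * hh - hh -> forall x i, (Dl s x) ord0 i = 0) ->
  (forall s, 0 <= s <= T -> s <= n%:R * hh -> forall x i, (Dl s x) ord0 i = 0).
Proof.
move=> IH.
have Q : forall k s, 0 <= s <= T -> s <= n%:R * hh ->
    forall x i, `|(Dl s x) ord0 i| <= B / 2 ^+ k.
  elim=> [|k IHk] s hs hsn x i.
    by rewrite expr0 divr1; exact: Dl_bound.
  have [hst|hst] := leP s (n%:R * hh - hh).
    by rewrite (IH s hs hst) normr0 divr_ge0 ?exprn_ge0 ?B_ge0.
  set t0 := n%:R * hh - hh.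
  have [int ->] := time_eq x i hs.
  set E := B / 2 ^+ k.
  have E0 : 0 <= E by rewrite divr_ge0 ?exprn_ge0 ?B_ge0.
  have W0 : 0 <= N%:R * (CK a' b' * (2 * E)).
    by rewrite mulr_ge0 // mulr_ge0 ?CK_ge0 // mulr_ge0.
  apply: (le_trans (time_bound (ltW hst) W0 int _)).
    move=> r /andP[r0 rs]; rewrite ind_itv.
    have hr : 0 <= r <= T by move: hs => /andP[_ sT]; apply/andP; split => //; lra.
    have [hr0|hr0] := ltP t0 r.
      rewrite mulr1; apply: Dv_bound => // y; apply: Sd_bound2 => z j.
      by apply: IHk => //; lra.
    rewrite mulr0.
    apply: (le_trans (@Dv_bound r x i (CK a' b' * (2 * 0)) hr _)).
      by move=> y; apply: Sd_bound2 => z j; rewrite (IH r hr hr0) normr0.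
    by rewrite !mulr0.
  have h1 : s - t0 <= hh by rewrite /t0; lra.
  apply: (@le_trans _ _ (N%:R * (CK a' b' * (2 * E)) * hh)).
    by rewrite ler_wpM2l.
  have -> : N%:R * (CK a' b' * (2 * E)) * hh = (Lc * hh) * E.
    by rewrite /Lc; ring.
  apply: (@le_trans _ _ (2^-1 * E)); first by rewrite ler_wpM2r // Lc_hh.
  by rewrite /E exprS invfM mulrCA.
move=> s hs hsn x i; apply: (@small0 _ B B_ge0) => k.
exact: Q.
Qed.

Lemma allP (n : nat) :
  forall s, 0 <= s <= T -> s <= n%:R * hh - hh -> forall x i, (Dl s x) ord0 i = 0.
Proof.
have h0 := hh_gt0.
elim: n => [|n IHn] s hs.
  by rewrite mul0r sub0r => h; exfalso; move: hs => /andP[s0 _]; lra.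
move=> h; apply: (step IHn) => //.
by move: h; rewrite -natr1 mulrDl mul1r addrK.
Qed.

Lemma Dl0 s x : 0 <= s <= T -> (eta s (lam *: x) : vec R d) = lam *: (gam s x : vec R d).
Proof.
move=> hs.
have h0 := hh_gt0.
have s0 : 0 <= s by case/andP: hs.
set n := Num.Def.archi_bound (s / hh + 1).
have hn : s / hh + 1 < n%:R.
  by apply: archi_boundP; rewrite addr_ge0 // divr_ge0 // ltW.
have hsn : s <= n%:R * hh - hh.
  have : s / hh < n%:R - 1 by lra.
  by rewrite ltr_pdivrMr // mulrBl mul1r => /ltW.
apply/eqP; rewrite -subr_eq0; apply/eqP/matrixP => k j.
by rewrite (ord1 k) (allP hs hsn) mxE.
Qed.

Lemma push_final t : 0 <= t <= T -> is_pushforward (nu t) (mu t) (fun z => lam *: z).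
Proof.
move=> ht A mA.
have [me _] := fl2 ht; have [mg _] := fl1 ht.
rewrite (pf2 ht mA).
have mA1 : measurable (eta t @^-1` A) by have := me measurableT A mA; rewrite setTI.
rewrite (push0 mA1).
have mA2 : measurable ((fun z : Rd R d => (lam *: (z : vec R d) : Rd R d)) @^-1` A).
  by have := Umeas measurableT mA; rewrite setTI.
rewrite (pf1 ht mA2).
congr (mubar _); rewrite /preimage; apply: funext => y /=.
by rewrite Dl0.
Qed.

End Core.

Lemma Kmax (R : realType) (d : nat) (Kc : vec R d -> vec R d) (L Rr : R) :
  (1 <= d)%N -> (forall x y, enorm (Kc x - Kc y) <= L * enorm (x - y)) ->
  closure [set x | Kc x != 0] `<=` [set x | enorm x < Rr] ->
  exists Km, forall w i, `|Kc w ord0 i| <= Km.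
Proof.
move=> hd Lip Kball.
pose y0 : vec R d := const_mx `|Rr|.
have ey0 : Rr <= enorm y0.
  apply: (le_trans (ler_norm Rr)).
  have := comp_le_enorm y0 (Ordinal hd); rewrite mxE normr_id; exact.
have Ky0 : Kc y0 = 0.
  apply/eqP; apply: contraT => /negbTE h.
  have : closure [set x | Kc x != 0] y0 by apply: subset_closure; rewrite /= h.
  by move/Kball => /=; rewrite ltNge ey0.
exists (`|L| * (d%:R * (`|Rr| + `|Rr|))) => w i.
have [Kw0|Kw0] := eqVneq (Kc w) 0.
  by rewrite Kw0 mxE normr0 !mulr_ge0 // addr_ge0.
have ew : enorm w < Rr.
  by apply: Kball; apply: subset_closure; rewrite /= Kw0.
have -> : Kc w ord0 i = (Kc w - Kc y0) ord0 i by rewrite Ky0 subr0.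
apply: (le_trans (comp_le_enorm _ _)); apply: (le_trans (Lip _ _)).
apply: (@le_trans _ _ (`|L| * enorm (w - y0))).
  by rewrite ler_wpM2r ?enorm_ge0 ?ler_norm.
rewrite ler_wpM2l //; apply: (le_trans (enorm_le_mx _)).
rewrite ler_wpM2l //; apply: (le_trans (ler_normB _ _)).
apply: lerD.
  apply: mx_le => // j; apply: (le_trans (comp_le_enorm _ _)).
  by apply: (le_trans (ltW ew)); exact: ler_norm.
by apply: mx_le => // j; rewrite mxE normr_id.
Qed.

End Aux.
Import Aux.

Theorem mainTheorem7 (R : realType) (d N : nat) (T : R)
    (Kc : vec R d -> vec R d) (Rr : R) (a b a' b' : R)
    (mubar nubar : meas R d) (mu nu : R -> meas R d) :
  (1 <= d)%N -> (1 <= N)%N -> 0 < T ->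
  lipschitzE Kc -> compact_support_in_ball Kc Rr ->
  a + b = a' + b' ->
  inMN N mubar -> inMN N nubar ->
  is_pushforward nubar mubar (fun z => (N%:R `^ (b' - b)) *: z) ->
  is_solution (Kscaled Kc N a b) N T mubar mu ->
  is_solution (Kscaled Kc N a' b') N T nubar nu ->
  forall t, 0 < t <= T ->
    is_pushforward (nu t) (mu t) (fun z => (N%:R `^ (b' - b)) *: z).
Proof.
move=> hd hN hT [L Lip] [_ Kball] hab [mubarT _] [nubarT _] push0
  [_ [gam [fl1 pf1]]] [_ [eta [fl2 pf2]]] t /andP[t0 tT].
have [Km Kb] := Kmax hd Lip Kball.
apply: (push_final hd hN hT hab Lip Kb mubarT nubarT push0 fl1 pf1 fl2 pf2).
by rewrite (ltW t0).
Qed.
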